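(* Let $S$ be a semigroup with finite $\mathcal{R}$-height, and let $A$ be a left ideal of $S$. Let $T$ be a right simple semigroup with no idempotent, disjoint from $S$, and let $U$ be the semigroup defined by the presentation with generating set $S\cup T$ and defining relations $ab=a\cdot b$, $cd=c\cdot d$ and $ac=c$ for all $a,b\in S$ and $c,d\in T$ (where $a\cdot b$ and $c\cdot d$ denote the products in $S$ and in $T$ respectively). Fix $c\in T$ and let $B=T^1(A\cup\{c\})$, a left ideal of $U$. Then $\mathrm{H}_{\mathcal{R}}(U)=\mathrm{H}_{\mathcal{R}}(S)+1$ and $\mathrm{H}_{\mathcal{R}}(B)=\mathrm{H}_{\mathcal{R}}(A)+2$.
   Context: A semigroup is right simple if it has no proper right ideals. A presentation $\langle X\mid R\rangle$ defines the quotient of the free semigroup on $X$ by the congruence generated by $R$. $T^1$ denotes $T$ with an identity adjoined. Green's preorder on a semigroup $M$: $u\leq_{\mathcal{R}} v$ iff $uM^1\subseteq vM^1$; $\mathcal{R}$ is the associated equivalence; the $\mathcal{R}$-height $\mathrm{H}_{\mathcal{R}}(M)$ is the supremum of cardinalities of chains in the poset of $\mathcal{R}$-classes. For $A$ and $B$ the $\mathcal{R}$-height is computed in $A$ and $B$ as semigroups in their own right. A left ideal is a non-empty subset $A$ with $SA\subseteq A$. *)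

(* Defs.v *)
From Stdlib Require Import List Arith.
Import ListNotations.
Set Implicit Arguments.

(** The carrier M comes with a binary operation [mul], an equivalence [eqv]
    (equality of elements; [eq] for honest types, the generated congruence
    for presented semigroups), and a subset [P] (the sub-semigroup inside
    which Green's relation is computed "as a semigroup in its own right"). *)
Section Green.
Variables (M : Type) (eqv : M -> M -> Prop) (mul : M -> M -> M) (P : M -> Prop).

(* u <=_R v  iff  u P^1 subset of v P^1, i.e. u = v or u = v w with w in P *)
Definition leR (u v : M) : Prop := eqv u v \/ exists w, P w /\ eqv u (mul v w).

Definition ltR (u v : M) : Prop := leR u v /\ ~ leR v u.

Fixpoint Rdesc (l : list M) : Prop :=
  match l with
  | x :: ((y :: _) as t) => ltR y x /\ Rdesc t
  | _ => True
  end.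

Definition Rchain (l : list M) : Prop := Forall P l /\ Rdesc l.

(* R-height as an extended natural: [Some n] = n, [None] = infinite *)
Definition has_R_height (h : option nat) : Prop :=
  match h with
  | Some n => (exists l, Rchain l /\ length l = n) /\
              (forall l, Rchain l -> length l <= n)
  | None => forall n, exists l, Rchain l /\ length l = n
  end.
End Green.

Definition oplus (h : option nat) (k : nat) : option nat :=
  match h with Some n => Some (n + k) | None => None end.

Definition associative_op {X : Type} (m : X -> X -> X) : Prop :=
  forall a b c, m a (m b c) = m (m a b) c.

Definition is_left_ideal {X : Type} (m : X -> X -> X) (A : X -> Prop) : Prop :=
  (exists a, A a) /\ forall s a, A a -> A (m s a).

Definition is_right_ideal {X : Type} (m : X -> X -> X) (I : X -> Prop) : Prop :=
  (exists a, I a) /\ forall a t, I a -> I (m a t).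

Definition right_simple {X : Type} (m : X -> X -> X) : Prop :=
  forall I, is_right_ideal m I -> forall x, I x.

Definition word (X : Type) : Type := (X * list X)%type.

Definition wmul {X : Type} (u v : word X) : word X :=
  (fst u, snd u ++ fst v :: snd v).

Definition letter {X : Type} (x : X) : word X := (x, []).

Inductive cong {X : Type} (R : word X -> word X -> Prop) : word X -> word X -> Prop :=
| cong_base u v : R u v -> cong R u v
| cong_refl u : cong R u u
| cong_sym u v : cong R u v -> cong R v u
| cong_trans u v w : cong R u v -> cong R v w -> cong R u w
| cong_mull w u v : cong R u v -> cong R (wmul w u) (wmul w v)
| cong_mulr w u v : cong R u v -> cong R (wmul u w) (wmul v w).

Section U.
Variables (S T : Type) (mulS : S -> S -> S) (mulT : T -> T -> T).

Inductive Urel : word (S + T) -> word (S + T) -> Prop :=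
| Urel_S a b : Urel (inl a, [inl b]) (letter (inl (mulS a b)))
| Urel_T c d : Urel (inr c, [inr d]) (letter (inr (mulT c d)))
| Urel_ST a c : Urel (inl a, [inr c]) (letter (inr c)).

Definition Ueq : word (S + T) -> word (S + T) -> Prop := cong Urel.

(* B = T^1 (A u {c}) as a subset of U (closed under Ueq) *)
Definition Bset (A : S -> Prop) (c : T) (w : word (S + T)) : Prop :=
  exists u, ((exists a, A a /\ u = letter (inl a)) \/ u = letter (inr c)) /\
            (Ueq w u \/ exists t : T, Ueq w (wmul (letter (inr t)) u)).
End U.

(* Main.v *)
Require Import Defs.
From Stdlib Require Import List Arith Lia.
Import ListNotations.

Lemma Rdesc_app {M} (eqv : M -> M -> Prop) mul P (l m : list M) :
  Rdesc eqv mul P l -> Rdesc eqv mul P m ->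
  (forall x y, In x l -> In y m -> ltR eqv mul P y x) ->
  Rdesc eqv mul P (l ++ m).
Proof.
  induction l as [|x l IH]; simpl; auto.
  intros Hl Hm Hc. destruct l as [|x' l'].
  - simpl. destruct m as [|y m']; auto; try (split; [apply Hc; simpl; auto | exact Hm]).
  - destruct Hl as [H1 H2]. simpl. split; [exact H1|].
    apply IH; auto; intros; apply Hc; simpl in *; tauto.
Qed.

Section Transfer.
Variables (M N : Type) (eqv : M -> M -> Prop) (mul : M -> M -> M) (P : M -> Prop)
  (mulN : N -> N -> N) (Q : N -> Prop) (f : M -> N) (g : N -> M).
Hypotheses (Hf : forall u v, eqv u v <-> f u = f v)
  (Hm : forall u v, f (mul u v) = mulN (f u) (f v))
  (Hs : forall n, f (g n) = n) (HP : forall u, P u <-> Q (f u)).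

Lemma tr_leR u v : leR eqv mul P u v <-> leR (@eq N) mulN Q (f u) (f v).
Proof.
  unfold leR. split.
  - intros [H|[w [Hw H]]]; [left; apply Hf; auto|right; exists (f w)].
    split; [apply HP; auto|]. rewrite <- Hm. apply Hf; auto.
  - intros [H|[w [Hw H]]]; [left; apply Hf; auto|right; exists (g w)].
    split; [apply HP; rewrite Hs; auto|]. apply Hf. rewrite Hm, Hs. auto.
Qed.

Lemma tr_ltR u v : ltR eqv mul P u v <-> ltR (@eq N) mulN Q (f u) (f v).
Proof. unfold ltR. rewrite !tr_leR. tauto. Qed.

Lemma tr_Rdesc l : Rdesc eqv mul P l <-> Rdesc (@eq N) mulN Q (map f l).
Proof.
  induction l as [|x l IH]; simpl; [tauto|].
  destruct l as [|y l']; simpl in *; [tauto|].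
  rewrite tr_ltR, IH. tauto.
Qed.

Lemma tr_Rchain l : Rchain eqv mul P l <-> Rchain (@eq N) mulN Q (map f l).
Proof.
  unfold Rchain. rewrite tr_Rdesc, Forall_map.
  split; intros [H1 H2]; split; auto; eapply Forall_impl; try eassumption;
  intros; apply HP; auto.
Qed.

Lemma tr_height h : has_R_height (@eq N) mulN Q h -> has_R_height eqv mul P h.
Proof.
  assert (Hmg : forall l, map f (map g l) = l).
  { intro l. rewrite map_map. rewrite <- (map_id l) at 2. apply map_ext; auto. }
  destruct h as [n|]; simpl.
  - intros [[l [H1 H2]] H3]. split.
    + exists (map g l). rewrite tr_Rchain, Hmg, length_map. auto.
    + intros l' Hl'. rewrite <- (length_map f). apply H3. apply tr_Rchain; auto.
  - intros H n. destruct (H n) as [l [H1 H2]].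
    exists (map g l). rewrite tr_Rchain, Hmg, length_map. auto.
Qed.
End Transfer.

Section NF.
Variables (S T : Type) (mulS : S -> S -> S) (mulT : T -> T -> T).
Hypotheses (assocS : associative_op mulS) (assocT : associative_op mulT).

Inductive nf := NS (s : S) | NT (t : T) | NTS (t : T) (s : S).

Definition nmul (x y : nf) : nf :=
  match x, y with
  | NS s, NS s' => NS (mulS s s')
  | NS _, NT t => NT t
  | NS _, NTS t s' => NTS t s'
  | NT t, NS s => NTS t s
  | NT t, NT t' => NT (mulT t t')
  | NT t, NTS t' s => NTS (mulT t t') s
  | NTS t s, NS s' => NTS t (mulS s s')
  | NTS t _, NT t' => NT (mulT t t')
  | NTS t _, NTS t' s' => NTS (mulT t t') s'
  end.

Lemma nmul_assoc x y z : nmul x (nmul y z) = nmul (nmul x y) z.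
Proof. destruct x, y, z; simpl; rewrite ?assocS, ?assocT; reflexivity. Qed.

Definition gen (x : S + T) : nf := match x with inl s => NS s | inr t => NT t end.
Definition F (acc : nf) (y : S + T) := nmul acc (gen y).
Definition eval (u : word (S + T)) : nf := fold_left F (snd u) (gen (fst u)).
Definition emb (n : nf) : word (S + T) :=
  match n with NS s => letter (inl s) | NT t => letter (inr t)
  | NTS t s => (inr t, [inl s]) end.

Lemma fold_nmul l a b : fold_left F l (nmul a b) = nmul a (fold_left F l b).
Proof.
  revert b; induction l as [|y l IH]; intro b; simpl; auto.
  replace (F (nmul a b) y) with (nmul a (F b y)) by (unfold F; apply nmul_assoc). apply IH.
Qed.

Lemma eval_wmul u v : eval (wmul u v) = nmul (eval u) (eval v).
Proof.
  destruct u as [x l], v as [y m]. unfold eval, wmul; simpl.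
  rewrite fold_left_app. simpl. apply fold_nmul.
Qed.

Lemma Ueq_eval u v : Ueq mulS mulT u v -> eval u = eval v.
Proof.
  unfold Ueq. induction 1; try congruence.
  - destruct H; reflexivity.
  - rewrite !eval_wmul; congruence.
  - rewrite !eval_wmul; congruence.
Qed.

Lemma emb_step n y : Ueq mulS mulT (wmul (emb n) (letter y)) (emb (nmul n (gen y))).
Proof.
  unfold Ueq. destruct n, y; simpl.
  - apply cong_base; constructor.
  - apply cong_base; constructor.
  - apply cong_refl.
  - apply cong_base; constructor.
  - change (cong (Urel mulS mulT) (wmul (letter (inr t)) (inl s, [inl s0]))
                 (wmul (letter (inr t)) (letter (inl (mulS s s0))))).
    apply cong_mull. apply cong_base; constructor.
  - apply cong_trans with (wmul (letter (inr t)) (letter (inr t0)) : word (S + T)); [|apply cong_base; constructor].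
    change (cong (Urel mulS mulT) (wmul (letter (inr t)) (inl s, [inr t0]))
                 (wmul (letter (inr t)) (letter (inr t0)))).
    apply cong_mull. apply cong_base; constructor.
Qed.

Lemma Ueq_emb u : Ueq mulS mulT u (emb (eval u)).
Proof.
  destruct u as [x l]. induction l as [|y l IH] using rev_ind.
  - destruct x; apply cong_refl.
  - change (x, l ++ [y]) with (wmul (x, l) (letter y)).
    eapply cong_trans. apply cong_mulr; exact IH.
    rewrite eval_wmul. apply emb_step.
Qed.

Lemma eval_emb n : eval (emb n) = n.
Proof. destruct n; reflexivity. Qed.

Lemma Ueq_iff u v : Ueq mulS mulT u v <-> eval u = eval v.
Proof.
  split; [apply Ueq_eval|]. intro H.
  eapply cong_trans. apply Ueq_emb. rewrite H. apply cong_sym, Ueq_emb.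
Qed.

Hypotheses (hTsimple : right_simple mulT) (hTnoid : forall e : T, mulT e e <> e).

Lemma rs t t' : exists u, mulT t u = t'.
Proof.
  apply (hTsimple (fun x => exists u, mulT t u = x)). split.
  - exists (mulT t t); exists t; auto.
  - intros a t0 [u Hu]. exists (mulT u t0). rewrite assocT, Hu. auto.
Qed.

Lemma c_not_fix c u : mulT u c <> c.
Proof.
  intro H. destruct (rs c u) as [v Hv].
  apply (hTnoid (mulT v c)).
  rewrite <- assocT. rewrite (assocT c v c). rewrite Hv, H. reflexivity.
Qed.

Definition isS (x : nf) : Prop := match x with NS _ => True | _ => False end.

Lemma nonS_mul x w : ~ isS x -> ~ isS (nmul x w).
Proof. destruct x, w; simpl; tauto. Qed.

Notation LE Q := (leR (@eq nf) nmul Q).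
Notation LT Q := (ltR (@eq nf) nmul Q).
Notation RD Q := (Rdesc (@eq nf) nmul Q).

Lemma le_nonS Q x y : ~ isS x -> LE Q y x -> ~ isS y.
Proof. intros Hx [H|[w [_ H]]]; subst; auto. apply nonS_mul; auto. Qed.

Lemma desc_nonS Q l x : RD Q (x :: l) -> ~ isS x -> Forall (fun y => ~ isS y) (x :: l).
Proof.
  revert x; induction l as [|y l IH]; intros x H Hx.
  - constructor; auto.
  - destruct H as [[H1 _] H2]. constructor; auto.
    apply IH; auto. eapply le_nonS; eauto.
Qed.

Section PS.
Variables (PS : S -> Prop) (Q : nf -> Prop).
Hypothesis HQ : forall s, Q (NS s) <-> PS s.

Lemma leS x y : LE Q (NS x) (NS y) <-> leR (@eq S) mulS PS x y.
Proof.
  unfold leR. split.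
  - intros [H|[w [Hw H]]]; [left; congruence|].
    destruct w; simpl in H; try discriminate. right; exists s.
    split; [apply HQ; auto|congruence].
  - intros [H|[w [Hw H]]]; [left; congruence|]. right; exists (NS w).
    split; [apply HQ; auto|simpl; congruence].
Qed.

Lemma ltS x y : LT Q (NS x) (NS y) <-> ltR (@eq S) mulS PS x y.
Proof. unfold ltR. rewrite !leS. tauto. Qed.

Lemma Rdesc_NS l : Rdesc (@eq S) mulS PS l -> RD Q (map NS l).
Proof.
  induction l as [|x l IH]; simpl; auto.
  destruct l as [|y l']; simpl in *; auto. intros [H1 H2]; split.
  - apply ltS; auto.
  - apply IH; auto.
Qed.

Lemma lt_nonS_NS y a : Q y -> ~ isS y -> LT Q y (NS a).
Proof.
  intros Hy Hn. split.
  - right. exists y. split; auto. destruct y; simpl in *; tauto.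
  - intros [H|[w [_ H]]]; [subst; simpl in Hn; auto|].
    apply (nonS_mul y w Hn). rewrite <- H. simpl; auto.
Qed.

Lemma decomp k (Hk : forall l, Forall Q l -> RD Q l -> Forall (fun y => ~ isS y) l -> length l <= k) :
  forall l, Forall Q l -> RD Q l ->
  exists l1 l2, l = map NS l1 ++ l2 /\ Rchain (@eq S) mulS PS l1 /\ length l2 <= k.
Proof.
  induction l as [|x t IH]; intros HF HR.
  - exists [], []. repeat split; simpl; auto. lia.
  - destruct x as [s|t0|t0 s].
    + inversion HF; subst.
      assert (HRt : RD Q t) by (destruct t; simpl in *; tauto).
      destruct (IH H2 HRt) as [l1 [l2 [E [[HF1 HR1] Hl]]]].
      exists (s :: l1), l2. split; [simpl; congruence|]. split; auto.
      split; [constructor; auto; apply HQ; auto|].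
      destruct l1 as [|s1 l1']; simpl; auto. split; auto.
      subst t. simpl in HR. destruct HR as [HR _]. apply ltS in HR. auto.
    + exists [], (NT t0 :: t). split; auto. split; [split; simpl; auto|].
      apply Hk; auto. apply desc_nonS with Q; simpl; auto.
    + exists [], (NTS t0 s :: t). split; auto. split; [split; simpl; auto|].
      apply Hk; auto. apply desc_nonS with Q; simpl; auto.
Qed.
End PS.

Lemma nonS_all x y : ~ isS x -> ~ isS y -> LE (fun _ => True) x y.
Proof.
  intros Hx Hy. right.
  destruct y as [|t|t s]; simpl in Hy; try tauto;
  destruct x as [|t'|t' s']; simpl in Hx; try tauto;
  destruct (rs t t') as [u Hu]; subst.
  - exists (NT u); simpl; auto.
  - exists (NTS u s'); simpl; auto.
  - exists (NT u); simpl; auto.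
  - exists (NTS u s'); simpl; auto.
Qed.

Lemma part1 n (c : T) : has_R_height (@eq S) mulS (fun _ => True) (Some n) ->
  has_R_height (@eq nf) nmul (fun _ => True) (Some (n + 1)).
Proof.
  intros [[l [[_ H1] H2]] H3]. split.
  - exists (map NS l ++ [NT c]). split.
    + split; [apply Forall_forall; auto|]. apply Rdesc_app.
      * apply Rdesc_NS with (PS := fun _ => True); tauto.
      * simpl; auto.
      * intros x y Hx Hy. apply in_map_iff in Hx. destruct Hx as [a [<- _]].
        destruct Hy as [<-|[]]. apply lt_nonS_NS; simpl; auto.
    + rewrite length_app, length_map; simpl; lia.
  - intros l' [HF HR].
    destruct (decomp (fun _ => True) (fun _ => True) ltac:(tauto) 1) with l'
      as [l1 [l2 [E [Hc Hl]]]]; auto.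
    + intros l0 _ HR0 HN. destruct l0 as [|x [|y l0]]; simpl; auto.
      exfalso. destruct HR0 as [[_ H] _]. apply H.
      apply Forall_inv in HN as HNx. apply Forall_inv_tail, Forall_inv in HN. apply nonS_all; auto.
    + subst. rewrite length_app, length_map. specialize (H3 l1 Hc). lia.
Qed.

Variables (A : S -> Prop) (c : T).
Hypothesis hA : is_left_ideal mulS A.

Definition Lnf (n : nf) : Prop :=
  (exists t a, A a /\ n = NTS t a) \/ (exists t, n = NT (mulT t c)).
Definition Bnf (n : nf) : Prop :=
  (exists a, A a /\ n = NS a) \/ n = NT c \/ Lnf n.

Lemma L_closed x w : Lnf x -> Bnf w -> Lnf (nmul x w).
Proof.
  intros [[t [a [Ha ->]]]|[t ->]] [[a' [Ha' ->]]|[->|[[t' [a' [Ha' ->]]]|[t' ->]]]]; simpl.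
  - left; exists t, (mulS a a'); split; auto. apply hA; auto.
  - right; exists t; auto.
  - left; exists (mulT t t'), a'; auto.
  - right; exists (mulT t t'); rewrite assocT; auto.
  - left; exists (mulT t c), a'; auto.
  - right; exists (mulT t c); auto.
  - left; exists (mulT (mulT t c) t'), a'; auto.
  - right; exists (mulT (mulT t c) t'); rewrite assocT; auto.
Qed.

Lemma L_all x y : Lnf x -> Lnf y -> LE Bnf x y.
Proof.
  intros Hx Hy. right.
  destruct Hy as [[t [a [Ha ->]]]|[t ->]];
  destruct Hx as [[t' [a' [Ha' ->]]]|[t' ->]].
  - destruct (rs t t') as [u Hu]. exists (NTS u a'). split.
    + right; right; left; exists u, a'; auto.
    + simpl; congruence.
  - destruct (rs t t') as [u Hu]. exists (NT (mulT u c)). split.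
    + right; right; right; exists u; auto.
    + simpl. rewrite assocT; congruence.
  - destruct (rs (mulT t c) t') as [u Hu]. exists (NTS u a'). split.
    + right; right; left; exists u, a'; auto.
    + simpl; congruence.
  - destruct (rs (mulT t c) t') as [u Hu]. exists (NT (mulT u c)). split.
    + right; right; right; exists u; auto.
    + simpl. rewrite assocT; congruence.
Qed.

Lemma L_bottom x y : Lnf x -> ~ LT Bnf y x.
Proof.
  intros Hx [[H|[w [Hw H]]] Hn].
  - subst; apply Hn; left; auto.
  - apply Hn. apply L_all; auto. subst; apply L_closed; auto.
Qed.

Lemma Bnf_nonS n : Bnf n -> ~ isS n -> n = NT c \/ Lnf n.
Proof. intros [[a [_ ->]]|H] Hn; simpl in *; tauto. Qed.

Lemma c_notL : ~ Lnf (NT c).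
Proof.
  intros [[t [a [_ H]]]|[t H]]; [discriminate|].
  injection H; intro E. apply (c_not_fix c t); auto.
Qed.

Lemma part2 h : has_R_height (@eq S) mulS A h ->
  has_R_height (@eq nf) nmul Bnf (oplus h 2).
Proof.
  assert (HQ : forall s, Bnf (NS s) <-> A s).
  { intro s; split.
    - intros [[a [Ha E]]|[E|[[t [a [_ E]]]|[t E]]]]; try discriminate.
      injection E; intros ->; auto.
    - intro; left; exists s; auto. }
  assert (Hcc : Lnf (NT (mulT c c))) by (right; exists c; auto).
  assert (Hup : forall l, Rchain (@eq nf) nmul Bnf l ->
     exists l1, Rchain (@eq S) mulS A l1 /\ length l <= length l1 + 2).
  { intros l' [HF HR].
    destruct (decomp A Bnf HQ 2) with l' as [l1 [l2 [E [Hc Hl]]]]; auto.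
    - intros l0 HF0 HR0 HN. destruct l0 as [|x [|y [|z l0]]]; simpl; auto.
      exfalso. destruct HR0 as [Hyx [Hzy _]].
      inversion HF0; subst. inversion H2; subst.
      inversion HN; subst. inversion H6; subst.
      destruct (Bnf_nonS y H3 H7) as [->|Ly]; [|exact (L_bottom _ _ Ly Hzy)].
      destruct (Bnf_nonS x H1 H5) as [->|Lx]; [|exact (L_bottom _ _ Lx Hyx)].
      destruct Hyx as [_ H]. apply H; left; auto.
    - exists l1; split; auto. subst. rewrite length_app, length_map. lia. }
  destruct h as [n|]; simpl.
  - intros [[l [[HF H1] H2]] H3]. split.
    + exists (map NS l ++ [NT c; NT (mulT c c)]). split.
      * split.
        -- apply Forall_app; split.
           ++ apply Forall_map. eapply Forall_impl; [|exact HF]. intros; apply HQ; auto.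
           ++ constructor; [right; left; auto|constructor; [right; right; auto|constructor]].
        -- apply Rdesc_app.
           ++ apply Rdesc_NS with (PS := A); auto.
           ++ simpl. split; auto. split.
              ** right. exists (NT c). split; [right; left; auto|reflexivity].
              ** intro H. apply c_notL. destruct H as [H|[w [Hw H]]].
                 --- rewrite H; auto.
                 --- rewrite H. apply L_closed; auto.
           ++ intros x y Hx Hy. apply in_map_iff in Hx. destruct Hx as [a [<- _]].
              destruct Hy as [<-|[<-|[]]]; apply lt_nonS_NS; simpl; auto.
              right; left; auto. right; right; auto.
      * rewrite length_app, length_map; simpl; lia.
    + intros l' Hl'. destruct (Hup l' Hl') as [l1 [Hc Hle]].
      specialize (H3 l1 Hc). lia.
  - intros H m. destruct (H m) as [l [[HF HR] Hlen]].
    exists (map NS l). split; [split|].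
    + apply Forall_map. eapply Forall_impl; [|exact HF]. intros; apply HQ; auto.
    + apply Rdesc_NS with (PS := A); auto.
    + rewrite length_map; auto.
Qed.

Lemma Bset_iff w : Bset mulS mulT A c w <-> Bnf (eval w).
Proof.
  unfold Bset. split.
  - intros [u [[[a [Ha ->]]| ->] [H|[t H]]]]; apply Ueq_iff in H;
      rewrite H; try rewrite eval_wmul; simpl.
    + left; exists a; auto.
    + right; right; left; exists t, a; auto.
    + right; left; auto.
    + right; right; right; exists t; auto.
  - intros [[a [Ha E]]|[E|[[t [a [Ha E]]]|[t E]]]].
    + exists (letter (inl a)). split; [left; exists a; auto|left; apply Ueq_iff; auto].
    + exists (letter (inr c)). split; [right; auto|left; apply Ueq_iff; auto].
    + exists (letter (inl a)). split; [left; exists a; auto|right; exists t].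
      apply Ueq_iff; rewrite eval_wmul; auto.
    + exists (letter (inr c)). split; [right; auto|right; exists t].
      apply Ueq_iff; rewrite eval_wmul; auto.
Qed.

Lemma main :
  (forall n, has_R_height (@eq S) mulS (fun _ => True) (Some n) ->
     has_R_height (Ueq mulS mulT) (@wmul (S + T)) (fun _ => True) (Some (n + 1)))
  /\
  (forall h, has_R_height (@eq S) mulS A h ->
     has_R_height (Ueq mulS mulT) (@wmul (S + T)) (Bset mulS mulT A c) (oplus h 2)).
Proof.
  split.
  - intros n H. apply tr_height with (mulN := nmul) (Q := fun _ => True) (f := eval) (g := emb).
    + apply Ueq_iff.
    + apply eval_wmul.
    + apply eval_emb.
    + tauto.
    + apply part1; auto.
  - intros h H. apply tr_height with (mulN := nmul) (Q := Bnf) (f := eval) (g := emb).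
    + apply Ueq_iff.
    + apply eval_wmul.
    + apply eval_emb.
    + apply Bset_iff.
    + apply part2; auto.
Qed.
End NF.

Theorem theorem4p8
  (S T : Type) (mulS : S -> S -> S) (mulT : T -> T -> T)
  (assocS : associative_op mulS) (assocT : associative_op mulT)
  (hSfin : exists n, has_R_height (@eq S) mulS (fun _ => True) (Some n))
  (A : S -> Prop) (hA : is_left_ideal mulS A)
  (hTsimple : right_simple mulT) (hTnoid : forall e : T, mulT e e <> e)
  (c : T) :
  (forall n, has_R_height (@eq S) mulS (fun _ => True) (Some n) ->
     has_R_height (Ueq mulS mulT) (@wmul (S + T)) (fun _ => True) (Some (n + 1)))
  /\
  (forall h, has_R_height (@eq S) mulS A h ->
     has_R_height (Ueq mulS mulT) (@wmul (S + T)) (Bset mulS mulT A c) (oplus h 2)).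
Proof.
  apply main; assumption.
Qed.
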